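(* Let $p\ge 2$, $0\le t\le1$ and $u>0$. Then the $p^2\times p^2$ real matrix $B$ defined below has rank exactly $p^2-1$.
   Context: Let $p\ge 2$ be an integer, $0\le t\le 1$ and $u>0$. Consider $p^2$ unknowns $p_{i,j}$, $1\le i,j\le p$; these represent the DASEP$(3,p,2)$ stationary probabilities $\mathrm{Pd}(0,i,j)$. For $1\le i,j\le p$ define the linear form $$A_{i,j}=\big(c_{i,j}+[i>1]+[j>1]+u[i<p]+u[j<p]\big)p_{i,j}-d_{i,j}\,p_{j,i}-[i<p]\,p_{i+1,j}-[j<p]\,p_{i,j+1}-u[i>1]\,p_{i-1,j}-u[j>1]\,p_{i,j-1}.$$ Here $[\cdot]$ is the Iverson bracket. The coefficients are $c_{i,j}=2+t$ and $d_{i,j}=1+2t$ if $i<j$; $c_{i,j}=1+2t$ and $d_{i,j}=2+t$ if $i>j$; and $c_{i,i}=d_{i,i}=0$. For example, for $1<i<j<p$ this reads $A_{i,j}=(4+t+2u)p_{i,j}-(1+2t)p_{j,i}-p_{i+1,j}-p_{i,j+1}-up_{i-1,j}-up_{i,j-1}$. For $1<j<i<p$ it reads $A_{i,j}=(3+2t+2u)p_{i,j}-(2+t)p_{j,i}-p_{i+1,j}-p_{i,j+1}-up_{i-1,j}-up_{i,j-1}$. For $i=j=1$ it reads $A_{1,1}=2u\,p_{1,1}-p_{2,1}-p_{1,2}$. The matrix $B$ has rows and columns indexed by pairs, with entries $B_{p(i_1-1)+j_1,\;p(i_2-1)+j_2}$ equal to the coefficient of $p_{i_1,j_1}$ in $A_{i_2,j_2}$.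 *)

(* Defs.v *)
From mathcomp Require Import all_boot all_order all_algebra.
Set Implicit Arguments. Unset Strict Implicit. Unset Printing Implicit Defensive.
Import Order.TTheory GRing.Theory Num.Theory.
Local Open Scope ring_scope.

Definition iv {R : pzRingType} (b : bool) : R := if b then 1 else 0.

(* c_{i,j} and d_{i,j} (indices 1-based naturals) *)
Definition cc {R : pzRingType} (t : R) (i j : nat) : R :=
  if (i < j)%N then 2 + t else if (j < i)%N then 1 + 2 * t else 0.
Definition dd {R : pzRingType} (t : R) (i j : nat) : R :=
  if (i < j)%N then 1 + 2 * t else if (j < i)%N then 2 + t else 0.

(* Coefficient of p_{i1,j1} in the linear form A_{i2,j2} (all indices 1-based,
   in 1..p).  A_{i,j} = (c_{ij} + [i>1] + [j>1] + u[i<p] + u[j<p]) p_{ij}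
     - d_{ij} p_{ji} - [i<p] p_{i+1,j} - [j<p] p_{i,j+1}
     - u[i>1] p_{i-1,j} - u[j>1] p_{i,j-1}.
   Contributions are summed, so coinciding variables (e.g. p_{ji}=p_{ij}
   when i=j, where d_{ii}=0 anyway) are handled correctly. *)
Definition Acoef {R : pzRingType} (p : nat) (t u : R) (i1 j1 i2 j2 : nat) : R :=
  iv ((i1 == i2) && (j1 == j2)) *
     (cc t i2 j2 + iv (1 < i2)%N + iv (1 < j2)%N
      + u * iv (i2 < p)%N + u * iv (j2 < p)%N)
  - iv ((i1 == j2) && (j1 == i2)) * dd t i2 j2
  - iv ((i2 < p)%N && (i1 == i2.+1) && (j1 == j2))
  - iv ((j2 < p)%N && (i1 == i2) && (j1 == j2.+1))
  - u * iv ((1 < i2)%N && (i1 == i2.-1) && (j1 == j2))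
  - u * iv ((1 < j2)%N && (i1 == i2) && (j1 == j2.-1)).

(* The 0-based index k of 'I_(p*p) corresponds to
   the pair (i, j) with k = p(i-1) + (j-1), i.e. i = k %/ p + 1, j = k %% p + 1.
   B_{k1,k2} = coefficient of p_{i1,j1} in A_{i2,j2}. *)
Definition Bmat {R : pzRingType} (p : nat) (t u : R) : 'M[R]_(p * p) :=
  \matrix_(k1 < p * p, k2 < p * p)
    Acoef p t u (k1 %/ p).+1 (k1 %% p).+1 (k2 %/ p).+1 (k2 %% p).+1.

(* Main.v *)
Require Import Defs.
From mathcomp Require Import all_boot all_order all_algebra.
From mathcomp Require Import zify ring lra.
Import Order.TTheory GRing.Theory Num.Theory.
Local Open Scope ring_scope.

Ltac crush := rewrite /Acoef /cc /dd /iv;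
  repeat match goal with |- context [if ?b then _ else _] =>
     case: (boolP b) => ?; try (exfalso; lia) end; try ring.

Section S.
Variable R : realFieldType.

Lemma sum_pp (p : nat) (F : nat -> R) :
  \sum_(0 <= k < p * p) F k = \sum_(0 <= a < p) \sum_(0 <= b < p) F (a * p + b)%N.
Proof.
suff H : forall m, \sum_(0 <= k < m * p) F k =
   \sum_(0 <= a < m) \sum_(0 <= b < p) F (a * p + b)%N by apply: H.
elim=> [|m IH]; first by rewrite mul0n !big_geq.
rewrite big_nat_recr //= -IH mulSnr (big_cat_nat _ (n := m * p)) //; last by lia.
congr (_ + _).
rewrite -{1}[(m * p)%N]add0n big_addn addKn.
by apply: eq_bigr => i _; rewrite addnC.
Qed.

Lemma sum1 (p m : nat) (c : bool) (g : nat -> R) (P : nat -> bool) :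
  (forall a, (a < p)%N -> P a = c && (a == m)) -> (c -> (m < p)%N) ->
  \sum_(0 <= a < p) iv (P a) * g a = iv c * g m.
Proof.
move=> HP Hc.
rewrite (eq_big_nat _ _ (F2 := fun a => iv c * (iv (a == m) * g a))); last first.
  by move=> a /andP [_ Ha]; rewrite HP // /iv; case: c {Hc HP}; case: (a == m) => /=; ring.
rewrite -mulr_sumr; case: c Hc {HP} => [/(_ isT) Hm|_]; last by rewrite /iv !mul0r.
rewrite (bigD1_seq m) /=; last by rewrite iota_uniq.
  rewrite big1_seq; first by rewrite eqxx /iv; ring.
  by move=> a /andP [Ha _]; rewrite /iv (negbTE Ha) mul0r.
by rewrite mem_index_iota; lia.
Qed.

Lemma sum2 (p m n : nat) (c : bool) (g : nat -> nat -> R) (P : nat -> nat -> bool) :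
  (forall a b, (a < p)%N -> (b < p)%N -> P a b = [&& c, a == m & b == n]) ->
  (c -> (m < p)%N && (n < p)%N) ->
  \sum_(0 <= a < p) \sum_(0 <= b < p) iv (P a b) * g a b = iv c * g m n.
Proof.
move=> HP Hc.
rewrite (eq_big_nat _ _ (F2 := fun a => iv (c && (a == m)) * g a n)); last first.
  move=> a /andP [_ Ha]; rewrite (@sum1 p n (c && (a == m)) (g a) (P a)) //.
    by move=> b Hb; rewrite HP // andbA.
  by case/andP=> /Hc; lia.
by apply: sum1 => // /Hc; lia.
Qed.


Lemma Acoef_split p (t u : R) i1 j1 i2 j2 : Acoef p t u i1 j1 i2 j2 =
  iv ((i1 == i2) && (j1 == j2)) *
     (cc t i2 j2 + iv (1 < i2)%N + iv (1 < j2)%N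
      + u * iv (i2 < p)%N + u * iv (j2 < p)%N)
  - iv ((i1 == j2) && (j1 == i2)) * dd t i2 j2
  - iv ((i2 < p)%N && (i1 == i2.+1) && (j1 == j2)) * 1
  - iv ((j2 < p)%N && (i1 == i2) && (j1 == j2.+1)) * 1
  - iv ((1 < i2)%N && (i1 == i2.-1) && (j1 == j2)) * u
  - iv ((1 < j2)%N && (i1 == i2) && (j1 == j2.-1)) * u.
Proof. rewrite /Acoef; ring. Qed.

Lemma rowsum p (t u : R) a1 b1 : (a1 < p)%N -> (b1 < p)%N ->
  \sum_(0 <= a < p) \sum_(0 <= b < p) Acoef p t u a1.+1 b1.+1 a.+1 b.+1 = 0.
Proof.
move=> Ha1 Hb1.
under eq_bigr => a _ do under eq_bigr => b _ do rewrite Acoef_split.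
under eq_bigr => a _ do rewrite !sumrB.
rewrite !sumrB.
rewrite (@sum2 p a1 b1 true); [|lia|lia].
rewrite (@sum2 p b1 a1 true); [|lia|lia].
rewrite (@sum2 p a1.-1 b1 (0 < a1)%N); [|lia|lia].
rewrite (@sum2 p a1 b1.-1 (0 < b1)%N); [|lia|lia].
rewrite (@sum2 p a1.+1 b1 (a1.+1 < p)%N); [|lia|lia].
rewrite (@sum2 p a1 b1.+1 (b1.+1 < p)%N); [|lia|lia].
rewrite /cc /dd /iv;
  repeat match goal with |- context [if ?b then _ else _] =>
     case: (boolP b) => ?; try (exfalso; lia) end; try ring.
Qed.


Lemma divmodE (p a b : nat) : (b < p)%N -> ((a * p + b) %/ p = a)%N /\ ((a * p + b) %% p = b)%N.
Proof.
move=> Hb; have Hp : (0 < p)%N by lia.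
by rewrite divnMDl // divn_small // addn0 modnMDl modn_small.
Qed.

Lemma Browsum p (t u : R) (k1 : 'I_(p * p)) : \sum_k2 Bmat p t u k1 k2 = 0.
Proof.
have Hp : (0 < p)%N by case: p k1 => [|//] [] //.
under eq_bigr do rewrite mxE.
rewrite -(big_mkord xpredT (fun k => Acoef p t u (k1 %/ p).+1 (k1 %% p).+1 (k %/ p).+1 (k %% p).+1)).
rewrite sum_pp.
rewrite (eq_big_nat _ _ (F2 := fun a => \sum_(0 <= b < p) Acoef p t u (k1 %/ p).+1 (k1 %% p).+1 a.+1 b.+1)).
  apply: rowsum; last by rewrite ltn_pmod.
  by rewrite ltn_divLR //; case: k1.
move=> a _; apply: eq_big_nat => b /andP [_ Hb].
by case: (@divmodE p a b Hb) => -> ->.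
Qed.

Lemma iv_ge0 (b : bool) : 0 <= iv b :> R.
Proof. by rewrite /iv; case: b. Qed.

Lemma sub_le0' (x y : R) : x <= 0 -> 0 <= y -> x - y <= 0.
Proof. move=> *; lra. Qed.

Lemma Boff p (t u : R) (k1 k2 : 'I_(p * p)) : 0 <= t -> 0 < u -> k1 != k2 ->
  Bmat p t u k1 k2 <= 0.
Proof.
move=> Ht Hu Hk; rewrite mxE /Acoef.
have -> : ((k1 %/ p).+1 == (k2 %/ p).+1) && ((k1 %% p).+1 == (k2 %% p).+1) = false.
  apply/negbTE; apply: contra Hk => /andP [/eqP [H1] /eqP [H2]].
  by apply/eqP/val_inj => /=; rewrite (divn_eq k1 p) (divn_eq k2 p) H1 H2.
have Hdd : forall i j, 0 <= dd t i j by move=> i j; rewrite /dd; case: ifP => _; [lra|case: ifP => _; lra].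
rewrite {1}/iv mul0r sub0r.
repeat apply: sub_le0'; rewrite ?oppr_le0; by
  (apply: mulr_ge0 => //; try apply: iv_ge0; try apply: ltW) || apply: iv_ge0.
Qed.


Lemma maxprin n (A : 'M[R]_n) (v : 'rV[R]_n) (k l : 'I_n) (M : R) :
 (forall k, \sum_l A k l = 0) -> (forall k l, k != l -> A k l <= 0) ->
 (forall k, \sum_l A k l * v 0 l = 0) -> (forall l, v 0 l <= M) ->
 v 0 k = M -> A k l < 0 -> v 0 l = M.
Proof.
move=> Hs Ho Hv Hm Hk Hl.
have H0 : \sum_j A k j * (v 0 j - M) = 0.
  under eq_bigr do rewrite mulrBr.
  by rewrite sumrB Hv -mulr_suml Hs mul0r subrr.
have Hnn : forall j, predT j -> 0 <= A k j * (v 0 j - M).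
  move=> j _; case: (eqVneq k j) => [<-|/Ho Hkj]; first by rewrite Hk subrr mulr0.
  have := Hm j; nra.
have := psumr_eq0P Hnn H0 (i := l) isT.
move/eqP; rewrite mulf_eq0 => /orP [/eqP HA|]; first by move: Hl; rewrite HA ltxx.
by rewrite subr_eq0 => /eqP.
Qed.

Lemma nU p (t u : R) a b : (a.+2 <= p)%N -> Acoef p t u a.+1 b.+1 a.+2 b.+1 = - u.
Proof. move=> H. crush. Qed.
Lemma nD p (t u : R) a b : (a.+2 <= p)%N -> Acoef p t u a.+2 b.+1 a.+1 b.+1 = - 1.
Proof. move=> H. crush. Qed.
Lemma nR p (t u : R) a b : (b.+2 <= p)%N -> Acoef p t u a.+1 b.+1 a.+1 b.+2 = - u.
Proof. move=> H. crush. Qed.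
Lemma nL p (t u : R) a b : (b.+2 <= p)%N -> Acoef p t u a.+1 b.+2 a.+1 b.+1 = - 1.
Proof. move=> H. crush. Qed.


Lemma constv p (t u : R) (v : 'rV[R]_(p * p)) : (2 <= p)%N -> 0 <= t -> 0 < u ->
  (forall k, \sum_l Bmat p t u k l * v 0 l = 0) ->
  exists M, forall k, v 0 k = M.
Proof.
move=> H2 Ht Hu Hv.
have Hp : (0 < p)%N by lia.
have Hpp : (0 < p * p)%N by rewrite muln_gt0 Hp.
case: (@arg_maxP _ _ _ (Ordinal Hpp) predT (fun k => v 0 k) isT) => km _ Hmax.
set M := v 0 km.
exists M.
pose P a b := forall k : 'I_(p * p), val k = (a * p + b)%N -> v 0 k = M.
have step : forall a b a' b', (a < p)%N -> (b < p)%N -> (a' < p)%N -> (b' < p)%N ->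
    P a b -> Acoef p t u a.+1 b.+1 a'.+1 b'.+1 < 0 -> P a' b'.
  move=> a b a' b' Ha Hb Ha' Hb' HP HA k' Hk'.
  have Hlt : (a * p + b < p * p)%N by nia.
  apply: (@maxprin _ (Bmat p t u) v (Ordinal Hlt) k' M).
  - exact: Browsum.
  - by move=> k l; apply: Boff.
  - exact: Hv.
  - by move=> l; apply: Hmax.
  - exact: HP.
  rewrite mxE /= Hk'.
  by case: (@divmodE p a b Hb) => -> ->; case: (@divmodE p a' b' Hb') => -> ->.
have downb : forall a b, (a < p)%N -> (b < p)%N -> P a b -> P a 0%N.
  move=> a; elim=> [//|b IH] Ha Hb HP; apply: IH => //; first lia.
  apply: (step a b.+1) => //; first lia.
  rewrite nL //; lra.
have downa : forall a, (a < p)%N -> P a 0%N -> P 0%N 0%N.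
  elim=> [//|a IH] Ha HP; apply: IH => //; first lia.
  apply: (step a.+1 0%N) => //; first lia.
  rewrite nD //; lra.
have upa : forall a, (a < p)%N -> P 0%N 0%N -> P a 0%N.
  elim=> [//|a IH] Ha H0.
  apply: (step a 0%N) => //; try lia; [exact: (IH ltac:(lia) H0)|rewrite nU //; lra].
have upb : forall a b, (a < p)%N -> (b < p)%N -> P a 0%N -> P a b.
  move=> a; elim=> [//|b IH] Ha Hb H0.
  apply: (step a b) => //; try lia; [exact: (IH Ha ltac:(lia) H0)|rewrite nR //; lra].
have Hkm : P (km %/ p)%N (km %% p)%N.
  move=> k Hk; suff -> : k = km by [].
  by apply: val_inj; rewrite /= Hk -divn_eq.
have Hdiv : forall k : 'I_(p * p), (k %/ p < p)%N by move=> k; rewrite ltn_divLR //; case: k.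
have Hmod : forall k : 'I_(p * p), (k %% p < p)%N by move=> k; rewrite ltn_pmod.
move=> k.
have HA : P (k %/ p)%N (k %% p)%N.
  apply: upb => //; apply: upa => //.
  apply: (downa (km %/ p)%N) => //.
  exact: (downb _ (km %% p)%N).
by apply: HA; rewrite -divn_eq.
Qed.

End S.

Theorem mainTheorem4 (R : realFieldType) (p : nat) (t u : R) :
  (2 <= p)%N -> 0 <= t -> t <= 1 -> 0 < u ->
  \rank (Bmat p t u) = (p * p).-1.
Proof.
move=> H2 Ht Ht1 Hu.
have Hpp : (0 < p * p)%N by rewrite muln_gt0; apply/andP; split; lia.
pose e : 'rV[R]_(p * p) := const_mx 1.
have HeB : e *m (Bmat p t u)^T = 0.
  apply/rowP => k; rewrite [LHS]mxE [RHS]mxE.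
  rewrite (eq_bigr (fun j => Bmat p t u k j)); first exact: Browsum.
  by move=> j _; rewrite [(Bmat p t u)^T j k]mxE [e 0 j]mxE mul1r.
have Hker : (kermx (Bmat p t u)^T <= e)%MS.
  apply/row_subP => i.
  have Hw : row i (kermx (Bmat p t u)^T) *m (Bmat p t u)^T = 0.
    by rewrite -row_mul mulmx_ker row0.
  have [M HM] : exists M, forall k, row i (kermx (Bmat p t u)^T) 0 k = M.
    apply: (@constv R p t u _ H2 Ht Hu) => k.
    have := congr1 (fun A : 'M[R]_(1, p * p) => A 0 k) Hw; rewrite [LHS]mxE [RHS]mxE => H; apply: (etrans _ H).
    by apply: eq_bigr => j _; rewrite [(Bmat p t u)^T j k]mxE mulrC.
  have -> : row i (kermx (Bmat p t u)^T) = M *: e.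
    by apply/rowP => k; rewrite HM [RHS]mxE [e 0 k]mxE mulr1.
  by apply: scalemx_sub; exact: submx_refl.
have He : (e <= kermx (Bmat p t u)^T)%MS by apply/sub_kermxP.
have Hr1 : \rank (kermx (Bmat p t u)^T) = 1%N.
  apply/eqP; rewrite eqn_leq; apply/andP; split.
    by apply: leq_trans (mxrankS Hker) _; exact: rank_leq_row.
  have <- : \rank e = 1%N.
    rewrite rank_rV; apply/eqP; rewrite eqb1.
    apply/eqP => /rowP /(_ (Ordinal Hpp)); rewrite !mxE => /eqP; by rewrite oner_eq0.
  exact: mxrankS He.
rewrite -mxrank_tr.
have := mxrank_ker (Bmat p t u)^T; rewrite Hr1.
have := rank_leq_row (Bmat p t u)^T.
move: (\rank _) => r; move: (p * p)%N => n; lia.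
Qed.
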